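(* In the stochastic epidemic model described in the context, for every $k\ge1$, $$I(k)=\Phi_I(k,0)I_0-\sum_{i=0}^{k-1}\Phi_I(k,i+1)\,v(i)\,u(i),$$ and the expected infected cases satisfy $$\mathbb{E}[I(k)]\le (1+\overline{\delta}-\overline{d_I})^{k}I_0-v_{\min}\sum_{i=0}^{k-1}(1+\overline{\delta}-\overline{d_I})^{k-i-1}\,\mathbb{E}[u(i)].$$
   Context: Time is indexed by days $k=0,1,2,\dots$. Let $(\delta(k))_{k\ge0}$, $(d_I(k))_{k\ge0}$, $(v(k))_{k\ge0}$ be three mutually independent sequences of random variables, each sequence i.i.d. in $k$, with $0\le \delta(k)\le \delta_{\max}$, $0\le d_I(k)\le d_{\max}$ where $d_{\max}<1$, and $0<v_{\min}\le v(k)\le v_{\max}\le 1$. Write $\overline{\delta}=\mathbb{E}[\delta(k)]$, $\overline{d_I}=\mathbb{E}[d_I(k)]$. The control $u(k)\ge0$ is causal: $u(k)$ is a function only of the information (states) available up to day $k$. The cases evolve by $S(k+1)=S(k)-\delta(k)I(k)$, $I(k+1)=(1+\delta(k))I(k)-v(k)u(k)-d_I(k)I(k)$, $R(k+1)=R(k)+v(k)u(k)$, $D(k+1)=D(k)+d_I(k)I(k)$, with $S(0)=S_0$, $I(0)=I_0>0$, $R(0)=D(0)=0$, $I_0\delta_{\max}<S_0$. It is assumed that the policy $u$ keeps $S(k),I(k),R(k),D(k)$ nonnegative for all $k$ with probability one. The state transition function is $\Phi_I(k,k_0)=\prod_{i=k_0}^{k-1}(1+\delta(i)-d_I(i))$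 for integers $k\ge k_0\ge0$ (empty product $=1$). *)

(* Defs.v *)
From HB Require Import structures.
From mathcomp Require Import all_boot all_order all_algebra.
From mathcomp Require Import all_classical all_reals all_analysis.
Set Implicit Arguments. Unset Strict Implicit. Unset Printing Implicit Defensive.
Import Order.TTheory GRing.Theory Num.Theory.
Local Open Scope classical_set_scope.
Local Open Scope ring_scope.

Definition mutually_independent {d} {T : measurableType d} {R : realType}
  (P : probability T R) {I : eqType} (X : I -> T -> R) : Prop :=
  forall (J : seq I) (B : I -> set R), uniq J ->
    (forall i, measurable (B i)) ->
    P (\big[setI/setT]_(i <- J) (X i @^-1` B i)) =
    (\prod_(i <- J) P (X i @^-1` B i))%E.

Definition identically_distributed {d} {T : measurableType d} {R : realType}
  (P : probability T R) (X : nat -> T -> R) : Prop :=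
  forall k (B : set R), measurable B -> P (X k @^-1` B) = P (X 0%N @^-1` B).

Definition noise_family {T : Type} {R : Type} (delta dI v : nat -> T -> R)
  (p : 'I_3 * nat) : T -> R :=
  if val p.1 == 0%N then delta p.2 else if val p.1 == 1%N then dI p.2 else v p.2.

Fixpoint Ist {T : Type} {R : realType} (I0 : R) (delta dI v u : nat -> T -> R)
  (k : nat) (w : T) : R :=
  match k with
  | 0 => I0
  | k'.+1 => (1 + delta k' w) * Ist I0 delta dI v u k' w - v k' w * u k' w
             - dI k' w * Ist I0 delta dI v u k' w
  end.

Fixpoint Sst {T : Type} {R : realType} (S0 I0 : R) (delta dI v u : nat -> T -> R)
  (k : nat) (w : T) : R :=
  match k with
  | 0 => S0
  | k'.+1 => Sst S0 I0 delta dI v u k' w - delta k' w * Ist I0 delta dI v u k' w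
  end.

Fixpoint Rst {T : Type} {R : realType} (v u : nat -> T -> R)
  (k : nat) (w : T) : R :=
  match k with
  | 0 => 0
  | k'.+1 => Rst v u k' w + v k' w * u k' w
  end.

Fixpoint Dst {T : Type} {R : realType} (I0 : R) (delta dI v u : nat -> T -> R)
  (k : nat) (w : T) : R :=
  match k with
  | 0 => 0
  | k'.+1 => Dst I0 delta dI v u k' w + dI k' w * Ist I0 delta dI v u k' w
  end.

Definition PhiI {T : Type} {R : realType} (delta dI : nat -> T -> R)
  (k k0 : nat) (w : T) : R :=
  \prod_(k0 <= i < k) (1 + delta i w - dI i w).

Definition info_upto {T : Type} {R : realType} (Sx Ix Rx Dx : nat -> T -> R)
  (k : nat) : set (set T) :=
  <<s [set A | exists j (B : set R), (j <= k)%N /\ measurable B /\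
        (A = Sx j @^-1` B \/ A = Ix j @^-1` B \/ A = Rx j @^-1` B
         \/ A = Dx j @^-1` B)] >>.

Definition causal {T : Type} {R : realType} (S0 I0 : R)
  (delta dI v u : nat -> T -> R) : Prop :=
  forall k (B : set R), measurable B ->
    info_upto (Sst S0 I0 delta dI v u) (Ist I0 delta dI v u) (Rst v u)
      (Dst I0 delta dI v u) k (u k @^-1` B).

(* Main.v *)
Require Import Defs.
From HB Require Import structures.
From mathcomp Require Import all_boot all_order all_algebra.
From mathcomp Require Import all_classical all_reals all_analysis.
From mathcomp Require Import measurable_realfun lebesgue_integral probability.
Set Implicit Arguments. Unset Strict Implicit. Unset Printing Implicit Defensive.
Import Order.TTheory GRing.Theory Num.Theory.
Local Open Scope classical_set_scope.
Local Open Scope ring_scope.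

Section indep_prod.
Local Open Scope ereal_scope.
Context d (T : measurableType d) (R : realType) (P : probability T R).
Context d2 (T2 : measurableType d2).
Variables (Z : T -> R) (Y : T -> T2).
Hypotheses (mZ : measurable_fun setT Z) (mY : measurable_fun setT Y).
Hypothesis indep : forall (A : set R) (B : set T2), measurable A -> measurable B ->
  P (Z @^-1` A `&` Y @^-1` B) = P (Z @^-1` A) * P (Y @^-1` B).

Let Zrv : {RV P >-> R} := HB.pack Z (isMeasurableFun.Build _ _ _ _ _ mZ).
Let Yrv : {RV P >-> T2} := HB.pack Y (isMeasurableFun.Build _ _ _ _ _ mY).
Let psi := fun w => (Z w, Y w).
Let mpsi : measurable_fun setT psi.
Proof. exact: measurable_fun_pair. Qed.
Let psirv : {RV P >-> (R * T2)%type} := HB.pack psi (isMeasurableFun.Build _ _ _ _ _ mpsi).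

Let m1 := distribution P Zrv.
Let m2 := distribution P Yrv.
Let m' := distribution P psirv.

Lemma indep_prod_int (W : T2 -> R) : measurable_fun setT W ->
  (forall y, (0 <= W y)%R) -> (forall w, (0 <= Z w)%R) ->
  \int[P]_w ((Z w * W (Y w))%:E) = \int[P]_w (Z w)%:E * \int[P]_w (W (Y w))%:E.
Proof.
move=> mW W0 Z0.
have eqm : forall X, measurable X -> (m1 \x m2) X = m' X.
  apply: product_measure_unique => A B mA mB.
  rewrite /m' /m1 /m2 /distribution /pushforward.
  by rewrite -indep.
pose f : R * T2 -> \bar R := fun x => ((Num.max x.1 0) * W x.2)%:E.
have mf : measurable_fun [set: (R * T2)%type] f.
  apply/measurable_EFinP; apply: measurable_funM.
    apply: measurable_maxr => //.
  exact: measurableT_comp.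
have f0 x : 0 <= f x by rewrite lee_fin mulr_ge0 // le_max lexx orbT.
transitivity (\int[m']_x f x).
  rewrite ge0_integral_distribution //; apply: eq_integral => w _.
  by rewrite /f /= (max_idPl (Z0 w)).
rewrite (eq_measure_integral (m1 \x m2)); last first.
  by move=> A mA _; exact/esym/eqm.
rewrite fubini_tonelli1 //.
rewrite /fubini_F.
transitivity (\int[m1]_x ((Num.max x 0)%:E * \int[m2]_y (W y)%:E)).
  apply: eq_integral => x _; rewrite /f /=.
  under eq_integral do rewrite EFinM.
  rewrite ge0_integralZl //.
  - exact/measurable_EFinP.
  - by move=> y _; rewrite lee_fin.
  - by rewrite lee_fin le_max lexx orbT.
have mmax : measurable_fun setT (fun x : R => (Num.max x 0)%:E).
  by apply/measurable_EFinP; exact: measurable_maxr.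
have mWE : measurable_fun setT (fun y => (W y)%:E) by exact/measurable_EFinP.
rewrite ge0_integralZr //; first last.
- by apply: integral_ge0 => y _; rewrite lee_fin.
- by move=> y _; rewrite lee_fin le_max lexx orbT.
congr (_ * _).
  rewrite ge0_integral_distribution //; last by move=> y; rewrite lee_fin le_max lexx orbT.
  by apply: eq_integral => w _ /=; rewrite (max_idPl (Z0 w)).
rewrite ge0_integral_distribution //.
Qed.
End indep_prod.

Lemma bigcapE (T : Type) (I : eqType) (J : seq I) (F : I -> set T) w :
  (\big[setI/setT]_(i <- J) F i) w <-> (forall i, i \in J -> F i w).
Proof.
elim: J => [|j J IH]; first by rewrite big_nil; split.
rewrite big_cons; split.
  move=> [Fj /IH H] i; rewrite inE => /orP[/eqP ->//|]; exact: H.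
move=> H; split; first by apply: H; rewrite inE eqxx.
by apply/IH => i iJ; apply: H; rewrite inE iJ orbT.
Qed.

Section Model.
Context d (T : measurableType d) (R : realType) (P : probability T R).
Variable X : ('I_3 * nat) -> T -> R.
Hypothesis mX : forall p, measurable_fun setT (X p).

Definition Pi n : set (set T) := [set A | exists (J : seq ('I_3 * nat))
  (B : 'I_3 * nat -> set R), [/\ uniq J, all (fun p => p.2 < n)%N J,
    (forall i, measurable (B i)) &
    A = \big[setI/setT]_(i <- J) (X i @^-1` B i)]].

Lemma Pi_setI n : setI_closed (Pi n).
Proof.
move=> A1 A2 [J1 [B1 [u1 a1 m1 ->]]] [J2 [B2 [u2 a2 m2 ->]]].
exists (J1 ++ [seq j <- J2 | j \notin J1]).
exists (fun i => if i \in J1 then (if i \in J2 then B1 i `&` B2 i else B1 i) else B2 i).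
split.
- rewrite cat_uniq u1 filter_uniq // andbT.
  by apply/hasPn => j; rewrite mem_filter => /andP[].
- by rewrite all_cat a1 all_filter; apply/allP => j jJ2 /=; rewrite (allP a2 j jJ2) implybT.
- move=> i; case: ifP => _; last exact: m2.
  by case: ifP => _; [exact: measurableI|exact: m1].
apply/seteqP; split => w.
- move=> [/bigcapE H1 /bigcapE H2]; apply/bigcapE => i.
  rewrite mem_cat mem_filter => /orP[iJ1|/andP[iJ1 iJ2]] /=.
    rewrite iJ1; case: ifP => iJ2; last exact: H1.
    by split; [exact: H1|exact: H2].
  by rewrite (negbTE iJ1); exact: H2.
- move/bigcapE => H; split; apply/bigcapE => i iJ.
    have := H i; rewrite mem_cat iJ /= => /(_ isT).
    by case: ifP => // _ [].
  have [iJ1|iJ1] := boolP (i \in J1).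
    by have := H i; rewrite mem_cat iJ1 /= iJ => /(_ isT) [].
  have := H i; rewrite mem_cat mem_filter iJ1 iJ orbT /= => /(_ isT).
  by rewrite (negbTE iJ1).
Qed.

Lemma Pi_meas n A : Pi n A -> measurable A.
Proof.
move=> [J [B [_ _ mB ->]]]; elim: J => [|j J IH]; first by rewrite big_nil.
rewrite big_cons; apply: measurableI => //.
by rewrite -[X in measurable X]setTI; apply: mX.
Qed.

Lemma Pi_mono n m : (n <= m)%N -> Pi n `<=` Pi m.
Proof.
move=> nm A [J [B [u a mB ->]]]; exists J, B; split => //.
by apply/allP => p /(allP a) /= pn; exact: leq_trans pn nm.
Qed.

Lemma Pi_gen p B : measurable B -> Pi p.2.+1 (X p @^-1` B).
Proof.
move=> mB; exists [:: p], (fun=> B); split => //=; first by rewrite ltnSn.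
by rewrite big_cons big_nil setIT.
Qed.

Lemma sPi_meas n A : <<s Pi n >> A -> measurable A.
Proof.
move=> h; apply: (smallest_sub _ _ h) => //.
  split; [exact: measurable0| |].
    by move=> B mB; rewrite setTD; exact: measurableC.
  by move=> F mF; exact: bigcupT_measurable.
exact: Pi_meas.
Qed.


Hypothesis indX : mutually_independent P X.

Lemma indep_set n p B : p.2 = n -> measurable B -> forall A, <<s Pi n >> A ->
  P (X p @^-1` B `&` A) = (P (X p @^-1` B) * P A)%E.
Proof.
move=> pn mB.
set Y := X p @^-1` B.
have mY : measurable Y by rewrite /Y -[X in measurable X]setTI; apply: mX.
pose L := [set A | measurable A /\ P (Y `&` A) = (P Y * P A)%E].
suff: <<s Pi n >> `<=` L by move=> H A /H [].
apply: (@lambda_system_subset _ (Pi n) (@Pi_setI n) setT L); last by [].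
- apply/dynkin_lambda_system; split.
  + by split => //; rewrite setIT probability_setT mule1.
  + move=> A [mA HA]; split; first exact: measurableC.
    rewrite -setDE measureD // ?HA ?probability_setC //; last first.
      by apply: (le_lt_trans (probability_le1 P mY)); rewrite ltey.
    rewrite muleBr ?mule1 //; first by congr (_ - _)%E; exact: HA.
    by rewrite ge0_fin_numE // (le_lt_trans (probability_le1 P mY)) // ltey.
  + move=> F tF HF; split; first by apply: bigcupT_measurable => k; case: (HF k).
    rewrite setI_bigcupr measure_bigcup //; last 2 first.
    * by move=> k _; apply: measurableI => //; case: (HF k).
    * apply/trivIsetP => i j _ _ ij; rewrite setIACA setIid.
      by move/trivIsetP: tF => /(_ i j Logic.I Logic.I ij) ->; rewrite setI0.
    rewrite measure_bigcup //; last by move=> k _; case: (HF k).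
    have fY : P Y = (fine (P Y))%:E by rewrite fineK // ge0_fin_numE // (le_lt_trans (probability_le1 P mY)) // ltey.
    transitivity (\sum_(k <oo | k \in [set: nat]) ((fine (P Y))%:E * P (F k)))%E.
      by apply: eq_eseriesr => k _; rewrite -fY; exact: (proj2 (HF k)).
    by rewrite nneseriesZl // -fY.
- move=> A PA; split; first exact: (Pi_meas PA).
  case: PA => J [B' [u a mB' ->]].
  have pJ : p \notin J.
    apply/negP => /(allP a) /=; by rewrite pn ltnn.
  pose B'' := fun i => if i == p then B else B' i.
  have mB'' : forall i, measurable (B'' i).
    by move=> i; rewrite /B''; case: ifP.
  have := @indX (p :: J) B''; rewrite /= pJ u => /(_ isT mB'').
  rewrite big_cons big_cons /B'' eqxx.
  rewrite (eq_big_seq (fun i => X i @^-1` B' i)); last first.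
    by move=> i iJ; case: eqP => // ip; rewrite -ip iJ in pJ.
  rewrite (eq_big_seq (fun i => P (X i @^-1` B' i))); last first.
    by move=> i iJ; case: eqP => // ip; rewrite -ip iJ in pJ.
  by rewrite -(indX u mB') => ->.
Qed.

End Model.

Section Meas.
Context d (T : measurableType d) (R : realType).
Variables (delta dI v u : nat -> T -> R) (S0 I0 : R).
Hypotheses (md : forall k, measurable_fun setT (delta k))
  (mdI : forall k, measurable_fun setT (dI k))
  (mv : forall k, measurable_fun setT (v k)).
Hypothesis hcausal : causal S0 I0 delta dI v u.

Let X := noise_family delta dI v.
Definition Tg n := g_sigma_algebraType (Pi X n).
Definition Gmeas n (f : T -> R) := measurable_fun (T := Tg n) setT f.

Lemma mX p : measurable_fun setT (X p).
Proof.
by rewrite /X /noise_family; case: ifP => _; [|case: ifP => _].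
Qed.

Lemma Gmeas_mono n m f : (n <= m)%N -> Gmeas n f -> Gmeas m f.
Proof.
move=> nm h _ B mB; have := h measurableT B mB.
apply: smallest_sub; first exact: smallest_sigma_algebra.
move=> A PA; apply: sub_sigma_algebra; exact: (Pi_mono nm).
Qed.

Lemma Gmeas_X p : Gmeas p.2.+1 (X p).
Proof.
move=> _ B mB; rewrite setTI; apply: sub_sigma_algebra; exact: Pi_gen.
Qed.

Lemma Gmeas_meas n f : Gmeas n f -> measurable_fun setT f.
Proof.
move=> h _ B mB; exact: (sPi_meas mX (h measurableT B mB)).
Qed.

Let o0 : 'I_3 := @Ordinal 3 0 isT.
Let o1 : 'I_3 := @Ordinal 3 1 isT.
Let o2 : 'I_3 := @Ordinal 3 2 isT.

Lemma Gmeas_delta k : Gmeas k.+1 (delta k).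
Proof. exact (@Gmeas_X (o0, k)). Qed.
Lemma Gmeas_dI k : Gmeas k.+1 (dI k).
Proof. exact (@Gmeas_X (o1, k)). Qed.
Lemma Gmeas_v k : Gmeas k.+1 (v k).
Proof. exact (@Gmeas_X (o2, k)). Qed.

Let Sx := Sst S0 I0 delta dI v u.
Let Ix := Ist I0 delta dI v u.
Let Rx := Rst v u.
Let Dx := Dst I0 delta dI v u.

Let Q n := [/\ Gmeas n (Sx n), Gmeas n (Ix n), Gmeas n (Rx n) & Gmeas n (Dx n)].

Lemma U_of_Q n : (forall j, (j <= n)%N -> Q j) -> Gmeas n (u n).
Proof.
move=> HQ _ B mB; rewrite setTI.
have := @hcausal n B mB; apply: smallest_sub; first exact: smallest_sigma_algebra.
move=> A [j [B' [jn [mB' HA]]]].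
have [h1 h2 h3 h4] := HQ j jn.
have g f : Gmeas j f -> <<s Pi X n >> (f @^-1` B').
  by move=> /(Gmeas_mono jn) /(_ measurableT B' mB'); rewrite setTI.
by case: HA => [->|[->|[->|->]]]; apply: g.
Qed.

Lemma Q0 : Q 0.
Proof.
by split; apply: measurable_cst.
Qed.

Lemma QS n : Q n -> Gmeas n (u n) -> Q n.+1.
Proof.
move=> [h1 h2 h3 h4] hu.
have L f : Gmeas n f -> Gmeas n.+1 f by apply: Gmeas_mono.
split.
- apply: measurable_funB; first exact: L.
  apply: measurable_funM; [exact: Gmeas_delta|exact: L].
- apply: measurable_funB; last first.
    apply: measurable_funM; [exact: Gmeas_dI|exact: L].
  apply: measurable_funB.
    apply: measurable_funM; last exact: L.
    apply: measurable_funD; [exact: measurable_cst|exact: Gmeas_delta].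
  apply: measurable_funM; [exact: Gmeas_v|exact: L].
- apply: measurable_funD; first exact: L.
  apply: measurable_funM; [exact: Gmeas_v|exact: L].
- apply: measurable_funD; first exact: L.
  apply: measurable_funM; [exact: Gmeas_dI|exact: L].
Qed.

Lemma Qall n : forall j, (j <= n)%N -> Q j.
Proof.
elim: n => [|n IH] j.
  by rewrite leqn0 => /eqP ->; exact: Q0.
rewrite leq_eqVlt => /orP[/eqP ->|]; last exact: IH.
by apply: QS; [exact: IH|exact: U_of_Q].
Qed.

Lemma Gmeas_u n : Gmeas n (u n).
Proof. exact: U_of_Q (Qall (n:=n)). Qed.

Lemma Gmeas_I n : Gmeas n (Ix n).
Proof. by have [] := Qall (leqnn n). Qed.

End Meas.

From mathcomp Require Import ring lra zify.

Lemma pathwise (T : Type) (R : realType) (I0 : R) (delta dI v u : nat -> T -> R) k w :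
  Ist I0 delta dI v u k w = PhiI delta dI k 0 w * I0
       - \sum_(0 <= i < k) PhiI delta dI k i.+1 w * v i w * u i w.
Proof.
elim: k => [|k IH].
  by rewrite /PhiI !big_geq // mul1r subr0.
set a := 1 + delta k w - dI k w.
have h1 : PhiI delta dI k.+1 0 w = PhiI delta dI k 0 w * a.
  by rewrite /PhiI big_nat_recr.
have h2 : \sum_(0 <= i < k.+1) PhiI delta dI k.+1 i.+1 w * v i w * u i w =
  (\sum_(0 <= i < k) PhiI delta dI k i.+1 w * v i w * u i w) * a + v k w * u k w.
  have e1 : PhiI delta dI k.+1 k.+1 w = 1 by rewrite /PhiI big_geq.
  rewrite big_nat_recr //= e1 mul1r mulr_suml; congr (_ + _).
  apply: eq_big_nat => i /andP[_ ik].
  by rewrite /PhiI big_nat_recr //= -/a; ring.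
rewrite /= IH h1 h2.
set s := \sum_(0 <= i < k) _.
set p := PhiI _ _ _ _ _.
rewrite /a; ring.
Qed.

Unset Implicit Arguments.
Section Main.
Local Open Scope ereal_scope.
Context d (T : measurableType d) (R : realType) (P : probability T R).
Variables (delta dI v u : nat -> T -> R)
  (delta_max d_max v_min v_max delta_bar dI_bar S0 I0 : R).
Hypotheses (md : forall k, measurable_fun setT (delta k))
  (mdI : forall k, measurable_fun setT (dI k))
  (mv : forall k, measurable_fun setT (v k)).
Hypothesis indep : mutually_independent P (noise_family delta dI v).
Hypotheses (hdelta : forall k w, (0 <= delta k w <= delta_max)%R)
  (hdI : forall k w, (0 <= dI k w <= d_max)%R) (hdmax : (d_max < 1)%R)
  (vmin0 : (0 < v_min)%R)
  (hv : forall k w, (v_min <= v k w <= v_max)%R)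
  (Edelta : forall k, 'E_P[delta k] = delta_bar%:E)
  (EdI : forall k, 'E_P[dI k] = dI_bar%:E)
  (I0pos : (0 < I0)%R)
  (u0 : forall k w, (0 <= u k w)%R)
  (hcaus : causal S0 I0 delta dI v u)
  (hae : forall k, {ae P, forall w,
     (0 <= Sst S0 I0 delta dI v u k w)%R /\ (0 <= Ist I0 delta dI v u k w)%R /\
     (0 <= Rst v u k w)%R /\ (0 <= Dst I0 delta dI v u k w)%R}).

Let X := noise_family delta dI v.
Let Ix := Ist I0 delta dI v u.
Let Ip n := fun w => Num.max (Ix n w) 0%R.
Let EP (f : T -> R) := \int[P]_w (f w)%:E.

Lemma EPE f : 'E_P[f] = EP f.
Proof. by rewrite unlock. Qed.

Let mXp : forall p, measurable_fun setT (X p) := mX md mdI mv.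

Lemma mIx n : measurable_fun setT (Ix n).
Proof. exact: (Gmeas_meas md mdI mv (Gmeas_I hcaus (n:=n))). Qed.

Lemma mu n : measurable_fun setT (u n).
Proof. exact: (Gmeas_meas md mdI mv (Gmeas_u hcaus (n:=n))). Qed.

Lemma GIp n : Gmeas delta dI v n (Ip n).
Proof.
apply: measurable_maxr; first exact: (Gmeas_I hcaus (n:=n)).
exact: measurable_cst.
Qed.

Lemma mIp n : measurable_fun setT (Ip n).
Proof. exact: (Gmeas_meas md mdI mv (GIp n)). Qed.

Lemma indep_noise (o : 'I_3) n (W : T -> R) : Gmeas delta dI v n W ->
  (forall w, 0 <= W w)%R ->
  EP (fun w => X (o, n) w * W w)%R = EP (X (o, n)) * EP W.
Proof.
move=> GW W0.
have mid : measurable_fun setT (fun w : T => (w : Tg delta dI v n)).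
  move=> _ B mB; rewrite setTI; exact: (sPi_meas mXp mB).
have X0 w : (0 <= X (o, n) w)%R.
  rewrite /X /noise_family; case: ifP => _; first by case/andP: (hdelta n w).
  case: ifP => _; first by case/andP: (hdI n w).
  by case/andP: (hv n w) => h _; apply: le_trans h; exact: ltW.
have ind : forall (A : set R) (B : set (Tg delta dI v n)), measurable A -> measurable B ->
    P (X (o, n) @^-1` A `&` (fun w : T => (w : Tg delta dI v n)) @^-1` B) =
    P (X (o, n) @^-1` A) * P ((fun w : T => (w : Tg delta dI v n)) @^-1` B).
  move=> A B mA mB.
  exact: (indep_set mXp indep (erefl (o, n).2) mA mB).
exact: (@indep_prod_int _ T R P _ (Tg delta dI v n) (X (o, n)) (fun w => w) (mXp _) mid ind W GW W0 X0).
Qed.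

Let o0 : 'I_3 := @Ordinal 3 0 isT.
Let o1 : 'I_3 := @Ordinal 3 1 isT.
Let o2 : 'I_3 := @Ordinal 3 2 isT.

Lemma Ip0 n w : (0 <= Ip n w)%R.
Proof. by rewrite /Ip le_max lexx orbT. Qed.

Lemma v0 n w : (0 <= v n w)%R.
Proof. by case/andP: (hv n w) => h _; apply: le_trans h; exact: ltW. Qed.

Lemma d0 n w : (0 <= delta n w)%R.
Proof. by case/andP: (hdelta n w). Qed.

Lemma dI0 n w : (0 <= dI n w)%R.
Proof. by case/andP: (hdI n w). Qed.

Lemma EPD (f g : T -> R) : measurable_fun setT f -> measurable_fun setT g ->
  (forall w, 0 <= f w)%R -> (forall w, 0 <= g w)%R ->
  EP (fun w => f w + g w)%R = EP f + EP g.
Proof.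
move=> mf mg f0 g0; rewrite /EP.
under eq_integral do rewrite EFinD.
apply: ge0_integralD => //.
- by move=> w _; rewrite lee_fin.
- exact/measurable_EFinP.
- by move=> w _; rewrite lee_fin.
- exact/measurable_EFinP.
Qed.

Lemma EP_ge0 (f : T -> R) : (forall w, 0 <= f w)%R -> 0 <= EP f.
Proof. by move=> f0; apply: integral_ge0 => w _; rewrite lee_fin. Qed.

Lemma EP_cst (r : R) : EP (fun=> r) = r%:E.
Proof.
rewrite /EP (_ : (fun w => r%:E) = cst r%:E) //.
rewrite integral_cst //; transitivity (r%:E * 1); last exact: mule1.
by congr (_ * _); exact: probability_setT.
Qed.

Lemma EP_le (f g : T -> R) : measurable_fun setT f -> measurable_fun setT g ->
  (forall w, 0 <= f w)%R -> (forall w, f w <= g w)%R -> EP f <= EP g.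
Proof.
move=> mf mg f0 fg; apply: ge0_le_integral => //.
- by move=> w _; rewrite lee_fin.
- exact/measurable_EFinP.
- exact/measurable_EFinP.
- by move=> w _; rewrite lee_fin.
Qed.

Lemma step n : EP (Ip n.+1) + EP (v n) * EP (u n) + dI_bar%:E * EP (Ip n) =
  EP (Ip n) + delta_bar%:E * EP (Ip n).
Proof.
have mvu : measurable_fun setT (fun w => v n w * u n w)%R.
  by apply: measurable_funM; [exact: mv|exact: mu].
have mdIp : measurable_fun setT (fun w => dI n w * Ip n w)%R.
  by apply: measurable_funM; [exact: mdI|exact: mIp].
have mdeIp : measurable_fun setT (fun w => delta n w * Ip n w)%R.
  by apply: measurable_funM; [exact: md|exact: mIp].
have E1 : EP (fun w => Ip n.+1 w + v n w * u n w + dI n w * Ip n w)%R =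
          EP (fun w => Ip n w + delta n w * Ip n w)%R.
  apply: ae_eq_integral => //.
  - apply/measurable_EFinP; apply: measurable_funD => //.
    apply: measurable_funD => //; exact: mIp.
  - apply/measurable_EFinP; apply: measurable_funD => //; exact: mIp.
  apply: filterS2 (hae n) (hae n.+1) => w [_ [h1 _]] [_ [h2 _]] _.
  rewrite /Ip (max_idPl h1) (max_idPl h2) /Ix /=; congr EFin; ring.
rewrite EPD in E1; last 4 first.
- apply: measurable_funD => //; exact: mIp.
- by [].
- by move=> w; rewrite addr_ge0 ?Ip0 // mulr_ge0 ?v0 ?u0.
- by move=> w; rewrite mulr_ge0 ?dI0 ?Ip0.
rewrite EPD in E1; last 4 first.
- exact: mIp.
- by [].
- exact: Ip0.
- by move=> w; rewrite mulr_ge0 ?v0 ?u0.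
rewrite EPD in E1; last 4 first.
- exact: mIp.
- by [].
- exact: Ip0.
- by move=> w; rewrite mulr_ge0 ?d0 ?Ip0.
have h1 : EP (fun w => v n w * u n w)%R = EP (v n) * EP (u n).
  exact: (indep_noise o2 n (u n) (Gmeas_u hcaus (n:=n)) (u0 n)).
have h2 : EP (fun w => dI n w * Ip n w)%R = dI_bar%:E * EP (Ip n).
  rewrite -(EdI n) EPE.
  exact: (indep_noise o1 n (Ip n) (GIp n) (Ip0 n)).
have h3 : EP (fun w => delta n w * Ip n w)%R = delta_bar%:E * EP (Ip n).
  rewrite -(Edelta n) EPE.
  exact: (indep_noise o0 n (Ip n) (GIp n) (Ip0 n)).
by rewrite -h1 -h2 -h3.
Qed.

Lemma reidx (c : R) (e : nat -> R) n :
  (\sum_(0 <= i < n.+1) c ^+ (n.+1 - i - 1) * e i =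
   c * \sum_(0 <= i < n) c ^+ (n - i - 1) * e i + e n)%R.
Proof.
rewrite big_nat_recr //=.
have -> : (n.+1 - n - 1 = 0)%N by lia.
rewrite expr0 mul1r; congr (_ + _)%R.
rewrite mulr_sumr; apply: eq_big_nat => i /andP[_ ilt].
have -> : (n.+1 - i - 1 = (n - i - 1).+1)%N by lia.
by rewrite exprS mulrA.
Qed.

Let c := (1 + delta_bar - dI_bar)%R.

Lemma c_ge0 : (0 <= c)%R.
Proof.
have h1 : (0 <= delta_bar)%R.
  rewrite -lee_fin -(Edelta 0) EPE; apply: EP_ge0; exact: d0.
have h2 : (dI_bar <= d_max)%R.
  rewrite -lee_fin -(EdI 0) EPE -EP_cst.
  apply: EP_le; [exact: mdI|exact: measurable_cst|exact: dI0|].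
  by move=> w; case/andP: (hdI 0 w).
have h3 : (0 <= 1 - dI_bar)%R by rewrite subr_ge0 (le_trans h2 (ltW hdmax)).
by rewrite /c addrAC addr_ge0.
Qed.

Lemma ev_bounds n : v_min%:E <= EP (v n) <= v_max%:E.
Proof.
apply/andP; split; rewrite -EP_cst.
  apply: EP_le; [exact: measurable_cst|exact: mv|by move=> w; exact: ltW|].
  by move=> w; case/andP: (hv n w).
apply: EP_le; [exact: mv|exact: measurable_cst|exact: v0|].
by move=> w; case/andP: (hv n w).
Qed.

Lemma main n : [/\ EP (Ip n) \is a fin_num,
  (forall i, (i < n)%N -> EP (u i) \is a fin_num) &
  (fine (EP (Ip n)) <= c ^+ n * I0 - v_min * \sum_(0 <= i < n) c ^+ (n - i - 1) * fine (EP (u i)))%R].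
Proof.
elim: n => [|n [fI fu bnd]].
  have -> : Ip 0 = fun=> I0.
    by apply: funext => w; rewrite /Ip /Ix /= (max_idPl (ltW I0pos)).
  rewrite EP_cst; split => //.
  by rewrite big_geq // mulr0 subr0 expr0 mul1r.
have st := step n.
set a := fine (EP (Ip n)).
have Ea : EP (Ip n) = a%:E by rewrite fineK.
have /andP[ev1 ev2] := ev_bounds n.
have fev : EP (v n) \is a fin_num.
  rewrite ge0_fin_numE; last exact: (EP_ge0 _ (v0 n)).
  by apply: (le_lt_trans ev2); exact: ltry.
set evr := fine (EP (v n)).
have Eev : EP (v n) = evr%:E by rewrite fineK.
have evrge : (v_min <= evr)%R by rewrite -lee_fin -Eev.
rewrite Ea Eev in st.
have fL : EP (Ip n.+1) + evr%:E * EP (u n) + dI_bar%:E * a%:E \is a fin_num.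
  by rewrite st -EFinM -EFinD.
rewrite fin_numD in fL; case/andP: fL => fL _.
rewrite fin_numD in fL; case/andP: fL => fI' fvu.
have fun' : EP (u n) \is a fin_num.
  move: fvu; case E: (EP (u n)) => [r| |] //.
    by rewrite gt0_muley // lte_fin (lt_le_trans vmin0 evrge).
  by have := EP_ge0 (u n) (u0 n); rewrite E.
set r := fine (EP (u n)).
have Eu : EP (u n) = r%:E by rewrite fineK.
set i' := fine (EP (Ip n.+1)).
have Ei : EP (Ip n.+1) = i'%:E by rewrite fineK.
have r0 : (0 <= r)%R by apply: fine_ge0; exact: EP_ge0.
rewrite Eu Ei -!EFinM -!EFinD in st.
have {}st := EFin_inj st.
split.
- exact: fI'.
- by move=> i; rewrite ltnS leq_eqVlt => /orP[/eqP ->|/fu].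
rewrite -/i' reidx -/r.
set S := (\sum_(0 <= i < n) c ^+ (n - i - 1) * fine (EP (u i)))%R.
have h1 : (c * a <= c * (c ^+ n * I0 - v_min * S))%R.
  by apply: ler_wpM2l; [exact: c_ge0|exact: bnd].
have h2 : (v_min * r <= evr * r)%R by apply: ler_wpM2r.
have e1 : (c * a = a + delta_bar * a - dI_bar * a)%R by rewrite /c; ring.
have e2 : (c * (c ^+ n * I0 - v_min * S) = c ^+ n.+1 * I0 - v_min * (c * S))%R.
  by rewrite exprS; ring.
rewrite mulrDr.
lra.
Qed.

Lemma final k : 'E_P[Ist I0 delta dI v u k] <=
  (((1 + delta_bar - dI_bar) ^+ k * I0)%:E
       - v_min%:E * \sum_(0 <= i < k)
           ((1 + delta_bar - dI_bar) ^+ (k - i - 1))%:E * 'E_P[u i]).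
Proof.
have -> : 'E_P[Ist I0 delta dI v u k] = EP (Ip k).
  rewrite EPE; apply: ae_eq_integral => //.
  - exact/measurable_EFinP/mIx.
  - exact/measurable_EFinP/mIp.
  apply: filterS (hae k) => w [_ [h _]] _.
  by rewrite /Ip /Ix (max_idPl h).
have [fI fu bnd] := main k.
rewrite (eq_big_nat _ _ (F2 := fun i => ((c ^+ (k - i - 1)) * fine (EP (u i)))%:E)); last first.
  by move=> i /andP[_ ik]; rewrite EPE EFinM fineK ?fu.
rewrite sumEFin -EFinM -EFinB -(fineK fI) lee_fin.
exact: bnd.
Qed.

End Main.

Theorem lemma2 (d : measure_display) (T : measurableType d) (R : realType)
  (P : probability T R) (delta dI v u : nat -> T -> R)
  (delta_max d_max v_min v_max delta_bar dI_bar S0 I0 : R) :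
  (forall k, measurable_fun setT (delta k)) ->
  (forall k, measurable_fun setT (dI k)) ->
  (forall k, measurable_fun setT (v k)) ->
  mutually_independent P (noise_family delta dI v) ->
  identically_distributed P delta ->
  identically_distributed P dI ->
  identically_distributed P v ->
  (forall k w, 0 <= delta k w <= delta_max) ->
  (forall k w, 0 <= dI k w <= d_max) -> d_max < 1 ->
  0 < v_min -> v_max <= 1 ->
  (forall k w, v_min <= v k w <= v_max) ->
  (forall k, ('E_P[delta k] = delta_bar%:E)%E) ->
  (forall k, ('E_P[dI k] = dI_bar%:E)%E) ->
  0 < I0 -> I0 * delta_max < S0 ->
  (forall k w, 0 <= u k w) ->
  causal S0 I0 delta dI v u ->
  (forall k, {ae P, forall w,
     0 <= Sst S0 I0 delta dI v u k w /\ 0 <= Ist I0 delta dI v u k w /\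
     0 <= Rst v u k w /\ 0 <= Dst I0 delta dI v u k w}) ->
  forall k, (1 <= k)%N ->
    (forall w, Ist I0 delta dI v u k w =
       PhiI delta dI k 0 w * I0
       - \sum_(0 <= i < k) PhiI delta dI k i.+1 w * v i w * u i w) /\
    ('E_P[Ist I0 delta dI v u k] <=
       ((1 + delta_bar - dI_bar) ^+ k * I0)%:E
       - v_min%:E * \sum_(0 <= i < k)
           ((1 + delta_bar - dI_bar) ^+ (k - i - 1))%:E * 'E_P[u i])%E.

Proof.
move=> md mdI mv indep _ _ _ hdelta hdI hdmax vmin0 _ hv Edelta EdI I0pos _ u0 hcaus hae k _.
split; first by move=> w; exact: pathwise.
exact: (final d T R P delta dI v u delta_max d_max v_min v_max delta_bar dI_bar S0 I0
  md mdI mv indep hdelta hdI hdmax vmin0 hv Edelta EdI I0pos u0 hcaus hae k).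
Qed.
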